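(* Let $G$ be a finite simple graph on vertex set $\mathcal C$ with a disjoint decomposition $\mathcal C=\mathcal C_I\cup\mathcal C_M\cup\mathcal C_O$, where $|\mathcal C_I|=|\mathcal C_O|=n$, the input qudits are labelled $\mathcal C_I=\{I_1,\dots,I_n\}$ and the output qudits $\mathcal C_O=\{O_1,\dots,O_n\}$. Let $|\phi\rangle_{\mathcal C}$ be the cluster state of $G$ and $S$ its generator. For each $a\in\mathcal C_M$ fix a unitary $u_a$ on $\mathbb C^d$ and an outcome $s_a\in\mathbb Z_d$, and let $P=\bigotimes_{a\in\mathcal C_M}u_a|s_a\rangle\langle s_a|u_a^{\dagger}$. Let $U$ be a unitary on $(\mathbb C^d)^{\otimes n}$, acting on $\mathcal C_O$ with the $i$-th tensor factor identified with $O_i$; for an operator $A$ on $(\mathbb C^d)^{\otimes n}$ write $(A)_{\mathcal C_O}$ for this action. Suppose that $|\psi\rangle=P|\phi\rangle_{\mathcal C}$ is nonzero and satisfies, for some $\lambda_{x,i},\lambda_{z,i}\in\mathbb Z_d$ and all $1\le i\le n$, $$X_{I_i}\,(UX_iU^{\dagger})_{\mathcal C_O}|\psi\rangle=q^{-\lambda_{x,i}}|\psi\rangle,\qquad Z_{I_i}^{\dagger}\,(UZ_iU^{\dagger})_{\mathcal C_O}|\psi\rangle=q^{-\lambda_{z,i}}|\psi\rangle,$$ where $X_i,Z_i$ act on the $i$-th factor of $(\mathbb C^d)^{\otimes n}$. Then for all outcomes $s_{I_1},\dots,s_{I_n}\in\mathbb Z_d$ there is a nonzero constant $c\in\mathbb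 C$ such that for every input state $|\psi(\mathrm{in})\rangle$ on $\mathcal C_I$, $$\Big(\bigotimes_{i=1}^n|x(s_{I_i})\rangle\langle x(s_{I_i})|_{I_i}\Big)\,P\;S\big(|\psi(\mathrm{in})\rangle_{\mathcal C_I}\otimes|+\rangle_{\mathcal C_M\cup\mathcal C_O}\big)=c\,\Big(\bigotimes_{i}|x(s_{I_i})\rangle_{I_i}\Big)\otimes\Big(\bigotimes_{a\in\mathcal C_M}u_a|s_a\rangle_a\Big)\otimes|\psi(\mathrm{out})\rangle_{\mathcal C_O},$$ where $|\psi(\mathrm{out})\rangle=U\,U_\Sigma|\psi(\mathrm{in})\rangle$ (with $|\psi(\mathrm{in})\rangle$ transported to $\mathcal C_O$ via $I_i\mapsto O_i$) and $$U_\Sigma=\bigotimes_{i=1}^{n}Z_i^{-\lambda_{x,i}-s_{I_i}}X_i^{\lambda_{z,i}}.$$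
   Context: Fix an integer $d\ge 2$ and $q=e^{2\pi i/d}$. A qudit has Hilbert space $\mathbb C^d$ with orthonormal basis $\{|k\rangle:k\in\mathbb Z_d\}$; $Z|k\rangle=q^k|k\rangle$, $X|k\rangle=|k-1\bmod d\rangle$ (so $XZ=qZX$); $|x(j)\rangle=d^{-1/2}\sum_k q^{jk}|k\rangle$, the eigenvector of $X$ with eigenvalue $q^j$. A subscript $a$ on an operator/state means it acts on/belongs to qudit $a$. For qudits $a,b$, $S_{ab}|j\rangle_a|k\rangle_b=q^{jk}|j\rangle_a|k\rangle_b$. For a graph $G$ on vertex set $\mathcal C$, the cluster state generator is $S=\prod_{\{a,b\}\in E(G)}S_{ab}$, $|+\rangle_{A}=\bigotimes_{a\in A}|x(0)\rangle_a$, and the cluster state is $|\phi\rangle_{\mathcal C}=S|+\rangle_{\mathcal C}$; it satisfies $X_a^\dagger\bigotimes_{b\text{ neighbour of }a}Z_b|\phi\rangle_{\mathcal C}=|\phi\rangle_{\mathcal C}$ for all $a$. Measuring qudit $a$ ''in pattern $u_aZu_a^\dagger$'' means measuring in the basis $\{u_a|s\rangle\}_{s\in\mathbb Z_d}$, outcome $s$ corresponding to $u_a|s\rangle$; input qudits are measured in the eigenbasis of $X$, outcome $s$ corresponding to $|x(s)\rangle$. *)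

(* Defs.v *)
From HB Require Import structures.
From mathcomp Require Import all_boot all_order all_algebra.
From mathcomp Require Import reals trigo.
From mathcomp Require Import complex.
Set Implicit Arguments. Unset Strict Implicit. Unset Printing Implicit Defensive.
Import Order.TTheory GRing.Theory Num.Theory.
Local Open Scope ring_scope.

Section Qudit.
Variables (R : realType) (d : nat).
Local Notation C := (complex R).

Definition qroot : C := ((cos (2 * pi / d%:R)) +i* (sin (2 * pi / d%:R)))%C.

(* basis configurations of a register of qudits indexed by the finite type T;
   qudit labels are elements of Z_d *)
Definition cfg (T : finType) := {ffun T -> 'Z_d}.
(* vectors of (C^d)^{tensor T}, as coefficient functions on the basis *)
Definition vec (T : finType) := cfg T -> C.
Definition mat (T : finType) := T -> T -> C.

Definition mulm (T : finType) (A B : mat T) : mat T :=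
  fun j k => \sum_(l : T) A j l * B l k.
Definition adjm (T : finType) (A : mat T) : mat T := fun j k => (A k j)^*.
Definition idm (T : finType) : mat T := fun j k => (j == k)%:R.
Definition unitary (T : finType) (A : mat T) : Prop :=
  mulm (adjm A) A = @idm T /\ mulm A (adjm A) = @idm T.

(* X|k> = |k-1> ;  Z|k> = q^k |k> *)
Definition Xm : mat 'Z_d := fun j k => (j == k - 1)%:R.
Definition Zm : mat 'Z_d := fun j k => (j == k)%:R * qroot ^+ k.
Definition xst (j : 'Z_d) : 'Z_d -> C :=
  fun k => (sqrtC (d%:R : C))^-1 * qroot ^+ (j * k)%N.
Definition projm (v : 'Z_d -> C) : mat 'Z_d := fun j k => v j * (v k)^*.

Definition upd (T : finType) (x : cfg T) (a : T) (k : 'Z_d) : cfg T :=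
  [ffun b => if b == a then k else x b].
Definition op1 (T : finType) (a : T) (A : mat 'Z_d) (w : vec T) : vec T :=
  fun x => \sum_(k : 'Z_d) A (x a) k * w (upd x a k).
Definition opfam (J T : finType) (s : seq J) (site : J -> T)
  (M : J -> mat 'Z_d) (w : vec T) : vec T :=
  foldr (fun j f => op1 (site j) (M j) f) w s.

Definition mxop (T : finType) (A : mat (cfg T)) (w : vec T) : vec T :=
  fun x => \sum_(y : cfg T) A x y * w y.
Definition matof (T : finType) (f : vec T -> vec T) : mat (cfg T) :=
  fun x y => f (fun z => (z == y)%:R) x.

(* (A)_{C_O}: operator A on (C^d)^{tensor n} acting on the qudits O 0,...,O (n-1) *)
Definition updO (n : nat) (V : finType) (O : 'I_n -> V) (x : cfg V)
  (y : cfg 'I_n) : cfg V :=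
  [ffun b => if [pick i | O i == b] is Some i then y i else x b].
Definition liftO (n : nat) (V : finType) (O : 'I_n -> V)
  (A : mat (cfg 'I_n)) (w : vec V) : vec V :=
  fun x => \sum_(y : cfg 'I_n) A [ffun i => x (O i)] y * w (updO O x y).

(* cluster state generator S = prod_{{a,b} in E} S_ab,
   graph given by its edge set E (each edge a 2-element vertex set) *)
Definition Sop (V : finType) (E : {set {set V}}) (w : vec V) : vec V :=
  fun x => (\prod_(e in E) qroot ^+ (\prod_(a in e) (x a : nat))%N) * w x.
Definition plusV (V : finType) : vec V := fun x => \prod_(a : V) xst 0 (x a).
Definition cluster (V : finType) (E : {set {set V}}) : vec V := Sop E (@plusV V).
Definition embed_in (n : nat) (V : finType) (I : 'I_n -> V) (CM CO : {set V})
  (psin : vec 'I_n) : vec V :=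
  fun x => psin [ffun i => x (I i)] * \prod_(a in CM :|: CO) xst 0 (x a).
Definition Pop (V : finType) (CM : {set V}) (u : V -> mat 'Z_d) (sM : V -> 'Z_d)
  (w : vec V) : vec V :=
  opfam (enum CM) id (fun a => projm (fun k => u a k (sM a))) w.
Definition USigma (n : nat) (lx lz s : 'I_n -> 'Z_d) (w : vec 'I_n) : vec 'I_n :=
  foldr (fun i f => iter (- lx i - s i)%R (op1 i Zm) (iter (lz i) (op1 i Xm) f))
    w (enum 'I_n).
End Qudit.

(* Main.v *)
Require Import Defs.
From HB Require Import structures.
From mathcomp Require Import all_boot all_order all_algebra.
From mathcomp Require Import reals trigo.
From mathcomp Require Import complex.
From mathcomp Require Import ring lra.
From Stdlib Require Import FunctionalExtensionality.
Set Implicit Arguments. Unset Strict Implicit. Unset Printing Implicit Defensive.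
Import Order.TTheory GRing.Theory Num.Theory.
Local Open Scope ring_scope.

Section Q.
Variables (R : realType) (p : nat).
Local Notation d := p.+2.
Local Notation C := (complex R).
Local Notation q := (qroot R d).
Let th : R := 2 * pi / d%:R.

Lemma mulcE (a b c e : R) : ((a +i* b) * (c +i* e) = (a * c - b * e) +i* (a * e + b * c) :> C)%C.
Proof. by []. Qed.

Lemma qpow k : q ^+ k = ((cos (k%:R * th)) +i* (sin (k%:R * th)))%C.
Proof.
elim: k => [|k IH]; first by rewrite expr0 mul0r cos0 sin0.
rewrite exprSr IH /qroot -/th mulcE -[k.+1]addn1 natrD mulrDl mul1r cosD sinD.
congr (_ +i* _)%C; ring.
Qed.

Lemma qd : q ^+ d = 1.
Proof.
rewrite qpow /th mulrCA mulfV ?pnatr_eq0 // mulr1 mulr_natl.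

by rewrite cos2pi sin2pi.
Qed.

Lemma qmod m : q ^+ m = q ^+ (m %% d).
Proof. by rewrite {1}(divn_eq m d) exprD mulnC exprM qd expr1n mul1r. Qed.

Lemma qconj : q * q^* = 1.
Proof.
rewrite /qroot.
have -> : forall a b : R, (a +i* b)%C^* = (a -i* b)%C :> C by [].
rewrite mulcE; apply/eqP; rewrite eq_complex /=; apply/andP; split; apply/eqP.
  by rewrite mulrN opprK -!expr2 cos2Dsin2.
by rewrite mulrN mulrC addNr.
Qed.

Lemma qprim k : (k < d)%N -> q ^+ k = 1 -> k = 0%N.
Proof.
move=> hk; case: k hk => // k hk; rewrite qpow => /eqP; rewrite eq_complex /= => /andP [/eqP hc _].
exfalso.
set x := (k.+1%:R * th) / 2.
have hx : k.+1%:R * th = x *+ 2 by rewrite /x -[_ *+ 2]mulr_natr divfK ?pnatr_eq0.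
have hx0 : 0 < x < pi.
  have -> : x = (k.+1%:R / d%:R) * pi.
    rewrite /x /th; field; by rewrite -natrD pnatr_eq0.
  have h1 : 0 < k.+1%:R / d%:R :> R by rewrite divr_gt0 ?ltr0n.
  have h2 : k.+1%:R / d%:R < 1 :> R by rewrite ltr_pdivrMr ?ltr0n // mul1r ltr_nat.
  have h3 := pi_gt0 R.
  apply/andP; split; first exact: mulr_gt0.
  by rewrite -[X in _ < X]mul1r ltr_pM2r.
move: hc; rewrite hx cos_mulr2n => h.
have h1 : cos x ^+ 2 = 1 by move: h; rewrite mulr2n; lra.
have : sin x ^+ 2 = 0 by rewrite sin2cos2 h1 subrr.
move/eqP; rewrite expf_eq0 /= => /eqP hs.
by have := sin_gt0_pi hx0; rewrite hs ltxx.
Qed.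


Definition e (a : 'Z_d) : C := q ^+ a.

Lemma valD (a b : 'Z_d) : ((a + b)%R : nat) = ((a + b) %% d)%N.
Proof. by []. Qed.
Lemma valM (a b : 'Z_d) : ((a * b)%R : nat) = ((a * b) %% d)%N.
Proof. by []. Qed.

Lemma eD a b : e (a + b) = e a * e b.
Proof. by rewrite /e valD -qmod exprD. Qed.
Lemma eM (a b : 'Z_d) : e (a * b) = q ^+ (a * b)%N.
Proof. by rewrite /e valM -qmod. Qed.
Lemma e0 : e 0 = 1.
Proof. by rewrite /e expr0. Qed.
Lemma eNe a : e (- a) * e a = 1.
Proof. by rewrite -eD addNr e0. Qed.
Lemma e_neq0 a : e a != 0.
Proof. by apply/negP => /eqP h; have := eNe a; rewrite h mulr0 => /eqP; rewrite eq_sym oner_eq0. Qed.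
Lemma eN a : e (- a) = (e a)^-1.
Proof. by apply: (mulIf (e_neq0 a)); rewrite eNe mulVf ?e_neq0. Qed.
Lemma einj a : e a = 1 -> a = 0.
Proof. by move=> h; apply/val_inj => /=; apply: qprim (ltn_ord a) h. Qed.
Lemma einj2 a b : e a = e b -> a = b.
Proof.
move=> h; apply/eqP; rewrite -subr_eq0; apply/eqP/einj.
by rewrite eD h eN mulfV ?e_neq0.
Qed.
Lemma econj a : (e a)^* = e (- a).
Proof.
have h : e a * (e a)^* = 1 by rewrite /e rmorphXn -exprMn qconj expr1n.
by apply: (mulfI (e_neq0 a)); rewrite h mulrC eNe.
Qed.
Lemma eX a m : e a ^+ m = e (a * m%:R).
Proof.
elim: m => [|m IH]; first by rewrite expr0 mulr0 e0.
by rewrite exprS IH -eD -[m.+1]addn1 natrD mulrDr mulr1 addrC.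
Qed.

Lemma sum_delta (T : finType) (t : T) (F : T -> C) :
  \sum_(l : T) (t == l)%:R * F l = F t.
Proof.
rewrite (bigD1 t) //= eqxx mul1r big1 ?addr0 // => l hl.
by rewrite eq_sym (negbTE hl) mul0r.
Qed.
Lemma sum_delta' (T : finType) (t : T) (F : T -> C) :
  \sum_(l : T) (l == t)%:R * F l = F t.
Proof. by rewrite -(sum_delta t); apply: eq_bigr => l _; rewrite eq_sym. Qed.

Section Upd.
Variable T : finType.
Implicit Types (x : cfg d T) (a b : T) (k : 'Z_d).
Lemma upd_same x a k : upd x a k a = k.
Proof. by rewrite /upd ffunE eqxx. Qed.
Lemma upd_other x a k b : b != a -> upd x a k b = x b.
Proof. by move=> h; rewrite /upd ffunE (negbTE h). Qed.
Lemma upd_id x a : upd x a (x a) = x.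
Proof. by apply/ffunP => b; rewrite /upd ffunE; case: eqP => // ->. Qed.
Lemma upd_upd x a k k' : upd (upd x a k) a k' = upd x a k'.
Proof. by apply/ffunP => b; rewrite /upd !ffunE; case: eqP. Qed.
Lemma upd_comm x a b k k' : a != b -> upd (upd x a k) b k' = upd (upd x b k') a k.
Proof.
move=> hab; apply/ffunP => c; rewrite /upd !ffunE.
case: (eqVneq c b) => [->|]; last by [].
by rewrite eq_sym (negbTE hab).
Qed.

Lemma op1X a w x : op1 a (@Xm R d) w x = w (upd x a (x a + 1)).
Proof.
rewrite /op1 -(sum_delta' (x a + 1) (fun k => w (upd x a k))).
by apply: eq_bigr => k _; rewrite /Xm eq_sym subr_eq.
Qed.
Lemma op1Z a w x : op1 a (@Zm R d) w x = e (x a) * w x.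
Proof.
rewrite /op1 /Zm.
transitivity (\sum_k (x a == k)%:R * (e k * w (upd x a k))); last by rewrite sum_delta upd_id.
by apply: eq_bigr => k _; rewrite mulrA.
Qed.
Lemma op1Zd a w x : op1 a (adjm (@Zm R d)) w x = e (- x a) * w x.
Proof.
rewrite /op1 /Zm /adjm -econj.
transitivity (\sum_k (k == x a)%:R * ((e (x a))^* * w (upd x a k))); last by rewrite sum_delta' upd_id.
by apply: eq_bigr => k _; rewrite rmorphM /= conjC_nat mulrA.
Qed.
Lemma op1P a (v : 'Z_d -> C) w x :
  op1 a (projm v) w x = v (x a) * \sum_k (v k)^* * w (upd x a k).
Proof. by rewrite /op1 mulr_sumr; apply: eq_bigr => k _; rewrite /projm mulrA. Qed.
Lemma op1_sum a A (B : finType) (F : B -> vec R d T) x :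
  op1 a A (fun y => \sum_(b : B) F b y) x = \sum_b op1 a A (F b) x.
Proof.
rewrite /op1 exchange_big /=; apply: eq_bigr => k _; by rewrite mulr_sumr.
Qed.
Lemma op1_scal a A (h : cfg d T -> C) w :
  (forall x k, h (upd x a k) = h x) ->
  op1 a A (fun y => h y * w y) = fun x => h x * op1 a A w x.
Proof.
move=> hh; apply: functional_extensionality => x; rewrite /op1 mulr_sumr; apply: eq_bigr => k _.
by rewrite hh mulrCA.
Qed.
End Upd.

Section Lift.
Variables (n : nat) (V : finType) (O : 'I_n -> V).
Hypothesis hOinj : injective O.
Implicit Types (x : cfg d V) (y z : cfg d 'I_n).
Local Notation prO x := [ffun i => x (O i)].

Lemma updO_O x y i : updO O x y (O i) = y i.
Proof.
rewrite /updO ffunE; case: pickP => [j /eqP /hOinj -> //|/(_ i)].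
by rewrite eqxx.
Qed.
Lemma updO_nO x y b : (forall i, O i != b) -> updO O x y b = x b.
Proof.
move=> h; rewrite /updO ffunE; case: pickP => [j hj|//].
by have := h j; rewrite hj.
Qed.
Lemma prO_updO x y : prO (updO O x y) = y.
Proof. by apply/ffunP => i; rewrite ffunE updO_O. Qed.
Lemma updO_updO x y z : updO O (updO O x y) z = updO O x z.
Proof.
apply/ffunP => b; rewrite {1}/updO ffunE; case: pickP => [j /eqP <-|h].
  by rewrite updO_O.
by rewrite !updO_nO // => i; rewrite h.
Qed.
Lemma updO_prO x : updO O x (prO x) = x.
Proof.
apply/ffunP => b; rewrite /updO ffunE; case: pickP => [j /eqP <-|//].
by rewrite ffunE.
Qed.
Lemma updO_upd x b k y : (forall i, O i != b) ->
  updO O (upd x b k) y = upd (updO O x y) b k.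
Proof.
move=> hb; apply/ffunP => c; rewrite /upd /updO !ffunE.
case: pickP => [j /eqP <-|//]; by rewrite (negbTE (hb j)).
Qed.
Lemma prO_upd x b k : (forall i, O i != b) -> prO (upd x b k) = prO x.
Proof. by move=> hb; apply/ffunP => i; rewrite !ffunE (negbTE (hb i)). Qed.
Lemma updO_upd_O x i k : updO O x (upd (prO x) i k) = upd x (O i) k.
Proof.
apply/ffunP => b; rewrite /updO /upd !ffunE; case: pickP => [j /eqP <-|h].
  rewrite !ffunE (inj_eq hOinj); by case: eqP.
by case: eqP => // hb; have := h i; rewrite hb eqxx.
Qed.

Lemma liftO_comp (A B : mat R (cfg d 'I_n)) (w : vec R d V) : liftO O A (liftO O B w) = liftO O (mulm A B) w.
Proof.
apply: functional_extensionality => x; rewrite /liftO /mulm.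
under eq_bigr => y _ do rewrite prO_updO mulr_sumr.
rewrite exchange_big /=; apply: eq_bigr => z _.
rewrite mulr_suml; apply: eq_bigr => y _; by rewrite updO_updO mulrA.
Qed.
Lemma liftO_id (w : vec R d V) : liftO O (@idm R _) w = w.
Proof.
apply: functional_extensionality => x; rewrite /liftO /idm.
by rewrite (sum_delta (prO x) (fun y => w (updO O x y))) updO_prO.
Qed.
Lemma liftO_scal (A : mat R (cfg d 'I_n)) (c : C) (w : vec R d V) : liftO O A (fun x => c * w x) = fun x => c * liftO O A w x.
Proof.
apply: functional_extensionality => x; rewrite /liftO mulr_sumr.
by apply: eq_bigr => y _; rewrite mulrCA.
Qed.
Lemma liftO_op1 (A : mat R (cfg d 'I_n)) b (B : mat R 'Z_d) (w : vec R d V) : (forall i, O i != b) ->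
  liftO O A (op1 b B w) = op1 b B (liftO O A w).
Proof.
move=> hb; apply: functional_extensionality => x; rewrite /liftO /op1.
under eq_bigr => y _ do rewrite mulr_sumr.
rewrite exchange_big /=; apply: eq_bigr => k _.
rewrite mulr_sumr prO_upd //; apply: eq_bigr => y _.
by rewrite updO_nO // updO_upd // mulrCA.
Qed.
Lemma liftO_matof_op1 i (A : mat R 'Z_d) (w : vec R d V) : liftO O (matof (op1 i A)) w = op1 (O i) A w.
Proof.
apply: functional_extensionality => x; rewrite /liftO /matof /op1.
under eq_bigr => y _ do rewrite mulr_suml.
rewrite exchange_big /=; apply: eq_bigr => k _.
rewrite ffunE.
transitivity (\sum_y (upd (prO x) i k == y)%:R * (A (x (O i)) k * w (updO O x y))).
  by apply: eq_bigr => y _; ring.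
by rewrite sum_delta updO_upd_O.
Qed.
End Lift.

Lemma matof_conj (T : finType) (U U' : mat R (cfg d T)) i (A : mat R 'Z_d) :
  matof (fun w => mxop U (op1 i A (mxop U' w))) = mulm U (mulm (matof (op1 i A)) U').
Proof.
apply: functional_extensionality => x; apply: functional_extensionality => y.
rewrite /matof /mulm /mxop; apply: eq_bigr => z _; congr (_ * _).
rewrite /op1.
transitivity (\sum_k A (z i) k * U' (upd z i k) y).
  apply: eq_bigr => k _; congr (_ * _).
  rewrite -(sum_delta' y (fun y0 => U' (upd z i k) y0)); apply: eq_bigr => l _; exact: mulrC.
under [RHS]eq_bigr => l _ do rewrite mulr_suml.
rewrite exchange_big /=; apply: eq_bigr => k _.
rewrite -(sum_delta (upd z i k) (fun l => A (z i) k * U' l y)); apply: eq_bigr => l _.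
by rewrite mulrAC mulrC.
Qed.

Section Fam.
Variables (J T : finType) (site : J -> T) (M : J -> mat R 'Z_d).

Lemma opfam_scal (l : seq J) (h : cfg d T -> C) (w : vec R d T) :
  (forall j x k, j \in l -> h (upd x (site j) k) = h x) ->
  opfam l site M (fun y => h y * w y) = fun x => h x * opfam l site M w x.
Proof.
elim: l => [|j l IH] hh //=.
rewrite IH; last by move=> j' x k hj; apply: hh; rewrite inE hj orbT.
by apply: op1_scal => x k; apply: hh; rewrite inE eqxx.
Qed.

Lemma opfam_sum (l : seq J) (B : finType) (F : B -> vec R d T) :
  opfam l site M (fun y => \sum_b F b y) = fun x => \sum_b opfam l site M (F b) x.
Proof.
elim: l => [|j l IH] //=; rewrite IH.
by apply: functional_extensionality => x; rewrite op1_sum.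
Qed.
End Fam.

Lemma Pop_struct (T : finType) (v : T -> 'Z_d -> C) (l : seq T) (w : vec R d T) :
  uniq l -> exists K : cfg d T -> C,
    (forall x y : cfg d T, (forall b, b \notin l -> x b = y b) -> K x = K y) /\
    forall x, opfam l id (fun a => projm (v a)) w x = (\prod_(a <- l) v a (x a)) * K x.
Proof.
elim: l => [|a l IH] /=.
  by move=> _; exists w; split => [x y h|x]; [congr w; apply/ffunP => b; exact: h | rewrite big_nil mul1r].
move=> /andP [hal /IH [K [hK hw]]].
exists (fun x => \sum_k (v a k)^* * K (upd x a k)); split.
  move=> x y hxy; apply: eq_bigr => k _; congr (_ * _); apply: hK => b hb.
  rewrite /upd !ffunE; case: eqP => // /eqP hba; apply: hxy.
  by rewrite inE negb_or hba hb.
move=> x; rewrite op1P big_cons -mulrA; congr (_ * _).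
rewrite mulr_sumr; apply: eq_bigr => k _; rewrite hw mulrCA; congr (_ * _).
apply: eq_big_seq => b hb; rewrite upd_other //.
by apply: contraNneq hal => <-.
Qed.

Lemma prod_lemma (n : nat) (V : finType) (I : 'I_n -> V) (hI : injective I)
  (v : 'I_n -> 'Z_d -> C) (g : 'I_n -> 'Z_d -> C) (h : cfg d V -> C) (l : seq 'I_n) :
  uniq l -> (forall i x k, h (upd x (I i) k) = h x) ->
  opfam l I (fun i => projm (v i)) (fun y => h y * \prod_i g i (y (I i))) =
  fun x => h x * \prod_i (if i \in l then v i (x (I i)) * \sum_k (v i k)^* * g i k
                            else g i (x (I i))).
Proof.
move=> hl hh; elim: l hl => [|j l IH] /=.
  by move=> _; apply: functional_extensionality => x; congr (_ * _); apply: eq_bigr => i _; rewrite in_nil.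
move=> /andP [hjl /IH ->]; apply: functional_extensionality => x.
rewrite op1P.
rewrite [in RHS](bigD1 j) //= inE eqxx /=.
have E : forall k, \prod_i (if i \in l then v i (upd x (I j) k (I i)) * \sum_k0 (v i k0)^* * g i k0
                            else g i (upd x (I j) k (I i))) =
   g j k * \prod_(i | i != j) (if i \in j :: l then v i (x (I i)) * \sum_k0 (v i k0)^* * g i k0
                            else g i (x (I i))).
  move=> k; rewrite (bigD1 j) //= (negbTE hjl) upd_same; congr (_ * _).
  apply: eq_bigr => i hij; rewrite inE (negbTE hij) /= upd_other //.
  by rewrite (inj_eq hI).
under eq_bigr => k _ do rewrite hh E.
have F : forall (a b : C) (f1 f2 : 'Z_d -> C),
    \sum_k f1 k * (a * (f2 k * b)) = a * b * \sum_k f1 k * f2 k.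
  by move=> a b f1 f2; rewrite mulr_sumr; apply: eq_bigr => k _; ring.
rewrite F; ring.
Qed.

Section USig.
Variables (n : nat) (lx lz s : 'I_n -> 'Z_d).
Lemma iterX (i : 'I_n) k (f : vec R d 'I_n) b :
  iter k (op1 i (@Xm R d)) f b = f (upd b i (b i + k%:R)).
Proof.
elim: k b => [|k IH] b /=; first by rewrite addr0 upd_id.
rewrite op1X IH upd_upd upd_same -addrA; congr (f (upd _ _ (_ + _))).
by rewrite -[k.+1]addn1 natrD addrC.
Qed.
Lemma iterZ (i : 'I_n) k (f : vec R d 'I_n) b :
  iter k (op1 i (@Zm R d)) f b = e (b i) ^+ k * f b.
Proof.
elim: k => [|k IH] /=; first by rewrite expr0 mul1r.
by rewrite op1Z IH exprS mulrA.
Qed.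

Lemma USig_gen (l : seq 'I_n) (psin : vec R d 'I_n) b : uniq l ->
  foldr (fun i f => iter (- lx i - s i)%R (op1 i (@Zm R d)) (iter (lz i) (op1 i (@Xm R d)) f)) psin l b
  = (\prod_(i <- l) e ((- lx i - s i) * b i)) * psin [ffun j => if j \in l then b j + lz j else b j].
Proof.
elim: l b => [|i l IH] b.
  by move=> _; rewrite big_nil mul1r; congr psin; apply/ffunP => j; rewrite !ffunE.
move=> /andP [hil hl]; cbn [foldr].
rewrite iterZ iterX IH // big_cons eX natr_Zp mulrA [b i * _]mulrC; congr (_ * _ * _).
  apply: eq_big_seq => j hj; rewrite upd_other //.
  by apply: contraNneq hil => <-.
congr psin; apply/ffunP => j; rewrite !ffunE inE.
case: (eqVneq j i) => [->|hji] /=.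
  by rewrite (negbTE hil) natr_Zp.
by [].
Qed.

Lemma USigmaE (psin : vec R d 'I_n) b :
  USigma lx lz s psin b = (\prod_i e ((- lx i - s i) * b i)) * psin [ffun j => b j + lz j].
Proof.
rewrite /USigma USig_gen ?enum_uniq //.
rewrite big_enum /=; congr (_ * psin _); apply/ffunP => j; by rewrite !ffunE mem_enum.
Qed.
End USig.

Section Eta.
Variables (n : nat) (V : finType) (I O : 'I_n -> V).
Hypotheses (hIinj : injective I) (hOinj : injective O) (hIO : forall i j, I i != O j).
Variables (lx lz : 'I_n -> 'Z_d) (eta : vec R d V).
Implicit Types (x y z : cfg d V) (rho : 'I_n -> 'Z_d).

Definition sh rho z : cfg d V := [ffun b =>
  if [pick i | I i == b] is Some i then z b + rho i
  else if [pick i | O i == b] is Some i then z b + rho i else z b].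
Definition star z : cfg d V := [ffun b =>
  if [pick i | I i == b] is Some i then 0
  else if [pick i | O i == b] is Some i then - lz i else z b].

Lemma pickI i : [pick j | I j == I i] = Some i.
Proof. by case: pickP => [j /eqP /hIinj -> //|/(_ i)]; rewrite eqxx. Qed.
Lemma pickO i : [pick j | O j == O i] = Some i.
Proof. by case: pickP => [j /eqP /hOinj -> //|/(_ i)]; rewrite eqxx. Qed.
Lemma pickIO i : [pick j | I j == O i] = None.
Proof. by case: pickP => [j hj|//]; have := hIO j i; rewrite hj. Qed.

Lemma cfg_ext x y : (forall i, x (I i) = y (I i)) -> (forall i, x (O i) = y (O i)) ->
  (forall b, (forall i, I i != b) -> (forall i, O i != b) -> x b = y b) -> x = y.
Proof.
move=> h1 h2 h3; apply/ffunP => b.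
case: (pickP (fun i => I i == b)) => [i /eqP <-|hI]; first exact: h1.
case: (pickP (fun i => O i == b)) => [i /eqP <-|hO]; first exact: h2.
by apply: h3 => i; rewrite ?hI ?hO.
Qed.

Lemma sh_I rho z i : sh rho z (I i) = z (I i) + rho i.
Proof. by rewrite ffunE pickI. Qed.
Lemma sh_O rho z i : sh rho z (O i) = z (O i) + rho i.
Proof. by rewrite ffunE pickIO pickO. Qed.
Lemma sh_oth rho z b : (forall i, I i != b) -> (forall i, O i != b) -> sh rho z b = z b.
Proof.
move=> h1 h2; rewrite ffunE; case: pickP => [i hi|_]; first by have := h1 i; rewrite hi.
by case: pickP => [i hi|//]; have := h2 i; rewrite hi.
Qed.
Lemma star_I z i : star z (I i) = 0.
Proof. by rewrite ffunE pickI. Qed.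
Lemma star_O z i : star z (O i) = - lz i.
Proof. by rewrite ffunE pickIO pickO. Qed.
Lemma star_oth z b : (forall i, I i != b) -> (forall i, O i != b) -> star z b = z b.
Proof.
move=> h1 h2; rewrite ffunE; case: pickP => [i hi|_]; first by have := h1 i; rewrite hi.
by case: pickP => [i hi|//]; have := h2 i; rewrite hi.
Qed.

Hypothesis H1 : forall i z,
  eta (upd (upd z (I i) (z (I i) + 1)) (O i) (z (O i) + 1)) = e (- lx i) * eta z.
Hypothesis H2 : forall i z,
  e (- z (I i)) * (e (z (O i)) * eta z) = e (- lz i) * eta z.

Lemma eta_step i z : eta (sh (fun j => (j == i)%:R) z) = e (- lx i) * eta z.
Proof.
rewrite -H1; congr eta; apply: cfg_ext => [j|j|b h1 h2].
- rewrite sh_I upd_other ?hIO //; case: (eqVneq j i) => [->|hji].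
    by rewrite upd_same.
  by rewrite upd_other ?(inj_eq hIinj) // addr0.
- rewrite sh_O; case: (eqVneq j i) => [->|hji].
    by rewrite upd_same.
  by rewrite !upd_other ?(inj_eq hOinj) ?addr0 // eq_sym hIO.
- by rewrite sh_oth // !upd_other // eq_sym.
Qed.

Lemma eta_iter i k z :
  eta (sh (fun j => if j == i then k%:R else 0) z) = e (- lx i) ^+ k * eta z.
Proof.
elim: k => [|k IH].
  rewrite expr0 mul1r; congr eta; apply: cfg_ext => [j|j|b h1 h2].
  - by rewrite sh_I; case: eqP; rewrite addr0.
  - by rewrite sh_O; case: eqP; rewrite addr0.
  - by rewrite sh_oth.
rewrite exprS -mulrA -IH -eta_step; congr eta; apply: cfg_ext => [j|j|b h1 h2].
- rewrite !sh_I -addrA; congr (_ + _); rewrite -[k.+1]addn1 natrD.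
  by case: eqP; rewrite ?addr0 // addrC.
- rewrite !sh_O -addrA; congr (_ + _); rewrite -[k.+1]addn1 natrD.
  by case: eqP; rewrite ?addr0 // addrC.
- by rewrite !sh_oth.
Qed.

Lemma eta_list (l : seq 'I_n) : uniq l -> forall rho z, (forall i, i \notin l -> rho i = 0) ->
  eta (sh rho z) = (\prod_(i <- l) e (- lx i * rho i)) * eta z.
Proof.
elim: l => [|j l IH] /=.
  move=> _ rho z h; rewrite big_nil mul1r; congr eta; apply: cfg_ext => [i|i|b h1 h2].
  - by rewrite sh_I h ?addr0.
  - by rewrite sh_O h ?addr0.
  - by rewrite sh_oth.
move=> /andP [hjl hl] rho z h.
pose rho' := fun i => if i == j then 0 else rho i.
have -> : sh rho z = sh (fun i => if i == j then (rho j : nat)%:R else 0) (sh rho' z).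
  apply: cfg_ext => [i|i|b h1 h2].
  - rewrite !sh_I /rho' -addrA; congr (_ + _); case: eqP => [->|]; rewrite ?natr_Zp ?add0r ?addr0 //.
  - rewrite !sh_O /rho' -addrA; congr (_ + _); case: eqP => [->|]; rewrite ?natr_Zp ?add0r ?addr0 //.
  - by rewrite !sh_oth.
rewrite eta_iter IH //; last first.
  move=> i hi; rewrite /rho'; case: eqP => // /eqP hij; apply: h.
  by rewrite inE negb_or hij hi.
rewrite big_cons mulrA eX natr_Zp; congr (_ * _ * _).
apply: eq_big_seq => i hi; rewrite /rho'; case: eqP => // hij.
by move: hjl; rewrite -hij hi.
Qed.

Lemma eta_sh rho z : eta (sh rho z) = (\prod_i e (- lx i * rho i)) * eta z.
Proof.
have := @eta_list (enum 'I_n) (enum_uniq _) rho z; rewrite big_enum /=; apply.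
by move=> i; rewrite mem_enum.
Qed.

Lemma etaE z : eta z = if [forall i, z (O i) == z (I i) - lz i]
   then (\prod_i e (- lx i * z (I i))) * eta (star z) else 0.
Proof.
pose w := sh (fun i => - z (I i)) z.
have -> : z = sh (fun i => z (I i)) w.
  apply: cfg_ext => [i|i|b h1 h2].
  - by rewrite sh_I sh_I addrNK.
  - by rewrite sh_O sh_O addrNK.
  - by rewrite !sh_oth.
rewrite eta_sh.
have wI : forall i, w (I i) = 0 by move=> i; rewrite sh_I addrN.
have wO : forall i, w (O i) = z (O i) - z (I i) by move=> i; rewrite sh_O.
have shI : forall i, sh (fun i => z (I i)) w (I i) = z (I i) by move=> i; rewrite sh_I wI add0r.
have shO : forall i, sh (fun i => z (I i)) w (O i) = z (O i) by move=> i; rewrite sh_O wO subrK.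
rewrite (_ : sh _ w = z); last by apply: cfg_ext => [i|i|b h1 h2]; rewrite ?shI ?shO // !sh_oth.
case: ifP => [/forallP hall|/negbT].
  congr (_ * eta _); apply: cfg_ext => [i|i|b h1 h2].
  - by rewrite wI star_I.
  - by rewrite wO star_O (eqP (hall i)) addrAC subrr add0r.
  - by rewrite star_oth // sh_oth.
rewrite negb_forall => /existsP [i /eqP hi].
suff -> : eta w = 0 by rewrite mulr0.
have := H2 i w; rewrite wI oppr0 e0 mul1r => /eqP; rewrite -subr_eq0 -mulrBl mulf_eq0.
case/orP => [|/eqP //]; rewrite subr_eq0 => /eqP /einj2; rewrite wO => h.
by exfalso; apply: hi; rewrite -[z (O i)](subrK (z (I i))) h addrC.
Qed.
End Eta.

Lemma rconj : ((sqrtC (d%:R : C))^-1)^* = (sqrtC (d%:R : C))^-1.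
Proof. by rewrite geC0_conj // invr_ge0 sqrtC_ge0 ler0n. Qed.

Lemma Sval (s b l x : 'Z_d) :
  \sum_k (@xst R d s k)^* * ((k == b + l)%:R * e (- x * k)) =
  (sqrtC (d%:R : C))^-1 * e ((- x - s) * b) * e ((- x - s) * l).
Proof.
rewrite (eq_bigr (fun k => (k == b + l)%:R * ((@xst R d s k)^* * e (- x * k)))); last first.
  by move=> k _; ring.
have cM : forall a c : C, (a * c)^* = a^* * c^* by move=> a c; exact: rmorphM.
rewrite sum_delta' /xst cM rconj -(eM s (b + l)) econj -mulrA -eD -mulrA -eD.
by congr (_ * e _); ring.
Qed.

Lemma prod_lemma_all (n : nat) (V : finType) (I : 'I_n -> V) (hI : injective I)
  (v : 'I_n -> 'Z_d -> C) (g : 'I_n -> 'Z_d -> C) (h : cfg d V -> C) :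
  (forall i x k, h (upd x (I i) k) = h x) ->
  opfam (enum 'I_n) I (fun i => projm (v i)) (fun y => h y * \prod_i g i (y (I i))) =
  fun x => h x * \prod_i (v i (x (I i)) * \sum_k (v i k)^* * g i k).
Proof.
move=> hh; rewrite prod_lemma ?enum_uniq //.
by apply: functional_extensionality => x; congr (_ * _); apply: eq_bigr => i _; rewrite mem_enum.
Qed.
End Q.

Theorem theorem2
  (R : realType) (d : nat) (hd : (1 < d)%N) (n : nat)
  (V : finType) (E : {set {set V}}) (hE : forall e, e \in E -> #|e| = 2%N)
  (CI CM CO : {set V})
  (hIM : [disjoint CI & CM]) (hIO : [disjoint CI & CO]) (hMO : [disjoint CM & CO])
  (hcover : CI :|: CM :|: CO = [set: V])
  (I O : 'I_n -> V) (hIinj : injective I) (hOinj : injective O)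
  (hI : [set I i | i : 'I_n] = CI) (hO : [set O i | i : 'I_n] = CO)
  (u : V -> mat R 'Z_d) (hu : forall a, a \in CM -> unitary (u a))
  (sM : V -> 'Z_d)
  (U : mat R (cfg d 'I_n)) (hU : unitary U)
  (lx lz : 'I_n -> 'Z_d)
  (hpsi : exists x, Pop CM u sM (cluster R E) x != 0)
  (hX : forall i : 'I_n,
     op1 (I i) (@Xm R d)
       (liftO O (matof (fun w => mxop U (op1 i (@Xm R d) (mxop (adjm U) w))))
          (Pop CM u sM (cluster R E)))
     = fun x => (qroot R d ^+ lx i)^-1 * Pop CM u sM (cluster R E) x)
  (hZ : forall i : 'I_n,
     op1 (I i) (adjm (@Zm R d))
       (liftO O (matof (fun w => mxop U (op1 i (@Zm R d) (mxop (adjm U) w))))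
          (Pop CM u sM (cluster R E)))
     = fun x => (qroot R d ^+ lz i)^-1 * Pop CM u sM (cluster R E) x) :
  forall s : 'I_n -> 'Z_d,
  exists c : complex R, c != 0 /\
  forall psin : vec R d 'I_n,
    opfam (enum 'I_n) I (fun i => projm (@xst R d (s i)))
      (Pop CM u sM (Sop E (embed_in I CM CO psin)))
    = fun x => c * ((\prod_(i : 'I_n) @xst R d (s i) (x (I i)))
                    * (\prod_(a in CM) u a (x a) (sM a))
                    * mxop U (USigma lx lz s psin) [ffun i => x (O i)]).
Proof.
have [p hp] : exists p, d = p.+2 by exists d.-2; case: d hd {hX hZ hpsi u hu sM U hU lx lz} => [|[|d]].
subst d.
have IinCI i : I i \in CI by rewrite -hI; apply: imset_f.
have OinCO i : O i \in CO by rewrite -hO; apply: imset_f.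
have hIO' i j : I i != O j.
  by apply/eqP => h; have := disjointFr hIO (IinCI i); rewrite h OinCO.
have IM i a : a \in CM -> I i != a.
  by move=> ha; apply/eqP => h; have := disjointFr hIM (IinCI i); rewrite h ha.
have OM i a : a \in CM -> O i != a.
  by move=> ha; apply/eqP => h; have := disjointFl hMO (OinCO i); rewrite h ha.
have cover b : b \notin CM -> (exists i, I i = b) \/ (exists i, O i = b).
  move=> hb; have : b \in [set: V] by [].
  rewrite -hcover !inE (negbTE hb) orbF => /orP [].
    by rewrite -hI => /imsetP [i _ ->]; left; exists i.
  by rewrite -hO => /imsetP [i _ ->]; right; exists i.
set psi := Pop CM u sM (cluster R E).
set v := fun a k => u a k (sM a).
set m := fun x : cfg p.+2 V => \prod_(a <- enum CM) v a (x a).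
have [K [hK hpsiK]] := Pop_struct v (cluster R E) (enum_uniq (mem CM)).
set eta := liftO O (adjm U) psi.
have hpsieta : psi = liftO O U eta by rewrite /eta liftO_comp // hU.2 liftO_id.
have hOI i j : O j != I i by rewrite eq_sym.
have H1 : forall i (z : cfg p.+2 V), eta (upd (upd z (I i) (z (I i) + 1)) (O i) (z (O i) + 1)) = @e R p (- lx i) * eta z.
  move=> i z.
  have := congr1 (liftO O (adjm U)) (hX i).
  rewrite -/psi matof_conj -!liftO_comp // liftO_matof_op1 // -/eta liftO_op1 //.
  rewrite liftO_comp // hU.1 liftO_id liftO_scal -/eta => /(congr1 (fun f => f z)).
  by rewrite op1X op1X upd_other // eN.
have H2 : forall i (z : cfg p.+2 V), @e R p (- z (I i)) * (@e R p (z (O i)) * eta z) = @e R p (- lz i) * eta z.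
  move=> i z.
  have := congr1 (liftO O (adjm U)) (hZ i).
  rewrite -/psi matof_conj -!liftO_comp // liftO_matof_op1 // -/eta liftO_op1 //.
  rewrite liftO_comp // hU.1 liftO_id liftO_scal -/eta => /(congr1 (fun f => f z)).
  by rewrite op1Zd op1Z => ->; rewrite eN.
have etaE' := etaE hIinj hOinj hIO' H1 H2.
have hpsiK' : forall x, psi x = m x * K x := hpsiK.
set K' := fun z : cfg p.+2 V =>
  \sum_y adjm U [ffun i => z (O i)] y * K (updO O z y).
have mupdO z y : m (updO O z y) = m z.
  apply: eq_big_seq => a; rewrite mem_enum => ha.
  by rewrite updO_nO // => i; apply: OM.
have hetaK z : eta z = m z * K' z.
  rewrite /eta /liftO /K' mulr_sumr; apply: eq_bigr => y _.
  by rewrite hpsiK' mupdO mulrCA.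
have hK' (z z' : cfg p.+2 V) : (forall b, b \notin CM -> z b = z' b) -> K' z = K' z'.
  move=> hzz; rewrite /K'.
  have -> : [ffun i => z (O i)] = [ffun i => z' (O i)].
    by apply/ffunP => i; rewrite !ffunE hzz //; apply/negP => /(OM i) /eqP; apply.
  apply: eq_bigr => y _; congr (_ * _); apply: hK => b; rewrite mem_enum => hb.
  rewrite /updO !ffunE; case: pickP => // _; exact: hzz.
set z0 : cfg p.+2 V := [ffun _ => 0].
set c0 := K' (star I O lz z0).
have E2 (z : cfg p.+2 V) : eta (star I O lz z) = c0 * m z.
  rewrite hetaK mulrC; congr (_ * _).
    apply: hK' => b /cover [[i <-]|[i <-]]; first by rewrite !star_I.
    by rewrite !star_O.
  apply: eq_big_seq => a; rewrite mem_enum => ha.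
  by rewrite star_oth // => i; [apply: IM | apply: OM].
have c0_neq0 : c0 != 0.
  apply/negP => /eqP c00; case: hpsi => x; rewrite -/psi hpsieta /liftO.
  rewrite big1 ?eqxx // => y _.
  by rewrite etaE' E2 c00 mul0r mulr0 if_same mulr0.
move=> s.
set r : complex R := (sqrtC ((p.+2)%:R : complex R))^-1.
have r_neq0 : r != 0 by rewrite invr_eq0 sqrtC_eq0 pnatr_eq0.
have xst0 k : @xst R p.+2 0 k = r by rewrite /xst mul0n expr0 mulr1.
set PV := \prod_(a : V) r.
set PMO := \prod_(a in CM :|: CO) r.
have PV_neq0 : PV != 0 by apply/prodf_neq0.
have PMO_neq0 : PMO != 0 by apply/prodf_neq0.
set kap := PMO / PV.
set al := fun i => - lx i - s i.
set c := kap * c0 * \prod_i (r * @e R p (al i * lz i)).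
exists c; split.
  rewrite /c !mulf_neq0 ?invr_eq0 //; apply/prodf_neq0 => i _.
  by rewrite mulf_neq0 ?e_neq0.
move=> psin.
have hemb : Sop E (embed_in I CM CO psin) =
    fun x => (kap * psin [ffun i => x (I i)]) * cluster R E x.
  apply: functional_extensionality => x.
  rewrite /Sop /embed_in /cluster /Sop /plusV.
  have e1 : \prod_(a in CM :|: CO) @xst R p.+2 0 (x a) = PMO by apply: eq_bigr => a _; rewrite xst0.
  have e2 : \prod_(a : V) @xst R p.+2 0 (x a) = PV by apply: eq_bigr => a _; rewrite xst0.
  rewrite e1 e2 /kap; field; exact: PV_neq0.
rewrite hemb.
have hPop : Pop CM u sM (fun x => (kap * psin [ffun i => x (I i)]) * cluster R E x) =
    fun x => (kap * psin [ffun i => x (I i)]) * psi x.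
  rewrite /Pop opfam_scal // => a x k; rewrite mem_enum => ha.
  by congr (_ * psin _); apply/ffunP => i; rewrite !ffunE (negbTE (IM i a ha)).
rewrite hPop.
set hb := fun (b : cfg p.+2 'I_n) (y : cfg p.+2 V) =>
  kap * c0 * m y * U [ffun i => y (O i)] b * psin [ffun j => b j + lz j].
set gb := fun (b : cfg p.+2 'I_n) (i : 'I_n) (k : 'Z_p.+2) =>
  (k == b i + lz i)%:R * @e R p (- lx i * k).
have hdec : (fun y : cfg p.+2 V => (kap * psin [ffun i => y (I i)]) * psi y) =
    fun y : cfg p.+2 V => \sum_b (hb b y * \prod_i gb b i (y (I i))).
  apply: functional_extensionality => y.
  rewrite hpsieta /liftO mulr_sumr; apply: eq_bigr => b _.
  rewrite etaE' E2 mupdO.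
  have Hc : [forall i, updO O y b (O i) == updO O y b (I i) - lz i] =
            [forall i, b i == y (I i) - lz i].
    by apply: eq_forallb => i; rewrite updO_O // updO_nO.
  rewrite Hc.
  under eq_bigr => i _ do rewrite updO_nO //.
  case: ifP => [/forallP hall|/negbT].
    have hy : [ffun i => y (I i)] = [ffun j => b j + lz j].
      by apply/ffunP => i; rewrite !ffunE (eqP (hall i)) subrK.
    have hg : \prod_i gb b i (y (I i)) = \prod_i @e R p (- lx i * y (I i)).
      by apply: eq_bigr => i _; rewrite /gb (eqP (hall i)) subrK eqxx mul1r.
    rewrite hg hy /hb; ring.
  rewrite negb_forall => /existsP [i hi].
  have hg : \prod_i gb b i (y (I i)) = 0.
    rewrite (bigD1 i) //= /gb.
    have -> : (y (I i) == b i + lz i) = false.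
      apply/negbTE; apply: contra hi => /eqP ->; by rewrite addrK.
    by rewrite mul0r mul0r.
  by rewrite hg !mulr0.
rewrite hdec opfam_sum.
apply: functional_extensionality => x.
have hinv b i (y : cfg p.+2 V) k : hb b (upd y (I i) k) = hb b y.
  rewrite /hb /m; congr (_ * _ * _ * _); last first.
    by congr (U _ b); apply/ffunP => j; rewrite !ffunE (negbTE (hOI i j)).
  apply: eq_big_seq => a; rewrite mem_enum => ha.
  by rewrite upd_other // eq_sym; apply: IM.
rewrite (eq_bigr (fun b => hb b x * \prod_i (@xst R p.+2 (s i) (x (I i)) *
      (r * @e R p (al i * b i) * @e R p (al i * lz i))))); last first.
  move=> b _.
  rewrite (prod_lemma_all hIinj (fun i => @xst R p.+2 (s i)) (gb b) (hinv b)).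
  congr (_ * _); apply: eq_bigr => i _; congr (_ * _).
  by rewrite /gb Sval.
have Pfact b : \prod_i (@xst R p.+2 (s i) (x (I i)) *
      (r * @e R p (al i * b i) * @e R p (al i * lz i))) =
   (\prod_i @xst R p.+2 (s i) (x (I i))) * (\prod_i @e R p (al i * b i)) *
   (\prod_i (r * @e R p (al i * lz i))).
  by rewrite -!big_split /=; apply: eq_bigr => i _; ring.
have hm : m x = \prod_(a in CM) u a (x a) (sM a) by rewrite /m big_enum.
rewrite /mxop mulr_sumr mulr_sumr; apply: eq_bigr => b _.
rewrite USigmaE Pfact /hb hm /c; ring.
Qed.
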